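(* Let $n\ge4$ and $\mathcal{A}\in\mathcal{S}_n$. Then $\operatorname{Ann}\mathcal{A}=\langle e_n\rangle$, and the automorphisms of $\mathcal{A}$ are exactly the linear maps $e_1\mapsto e_1+xe_n$, $e_i\mapsto e_i$ ($2\le i\le n$), with $x\in\mathbb{C}$.
   Context: Over $\mathbb{C}$, basis $e_1,\dots,e_n$, $e_ie_j=\sum_kc_{ij}^ke_k$. Condition ( * ): $c_{ij}^k=0$ whenever $k\le\max\{i,j\}$. For $n\ge4$, $\mathcal{S}_n$ is the family of commutative structures satisfying ( * ) with $e_i^2=e_{i+1}$ ($1\le i\le n-1$), $c_{23}^4=1$, $c_{12}^4\ne0$, $c_{1i}^{i+1}=0$ ($2\le i\le n-1$), other constants arbitrary subject to ( * ) and commutativity. $\operatorname{Ann}\mathcal{A}=\{a:a\mathcal{A}+\mathcal{A}a=0\}$. *)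

(* Defs.v *)
From HB Require Import structures.
From mathcomp Require Import all_boot all_order all_algebra.
From mathcomp Require Import complex.
From mathcomp Require Import Rstruct.
Set Implicit Arguments. Unset Strict Implicit. Unset Printing Implicit Defensive.
Import Order.TTheory GRing.Theory Num.Theory.
Local Open Scope ring_scope.

Definition C : fieldType := (Rdefinitions.R)[i].

(* Structure constants, indexed 1-based as in the paper:
   e_i e_j = \sum_k c i j k e_k  (only 1 <= i,j,k <= n matter). *)
Definition structc := nat -> nat -> nat -> C.

(* Elements of the n-dimensional algebra: coordinate row vectors;
   coordinate number k : 'I_n is the coefficient of e_(k+1). *)
Definition basis_vec (n i : nat) : 'rV[C]_n :=
  \row_(k < n) (if (k : nat) == i.-1 then 1 else 0).

Definition amul (n : nat) (c : structc) (u v : 'rV[C]_n) : 'rV[C]_n :=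
  \row_(k < n) \sum_(i < n) \sum_(j < n) u 0 i * v 0 j * c i.+1 j.+1 k.+1.

Definition in_Ann (n : nat) (c : structc) (a : 'rV[C]_n) : Prop :=
  forall b : 'rV[C]_n, amul c a b = 0 /\ amul c b a = 0.

(* Automorphism: invertible linear map u |-> u *m M preserving the product
   (row i of M is the image of e_(i+1)). *)
Definition is_aut (n : nat) (c : structc) (M : 'M[C]_n) : Prop :=
  M \in unitmx /\ forall u v : 'rV[C]_n, amul c (u *m M) (v *m M) = amul c u v *m M.

Definition in_Sn (n : nat) (c : structc) : Prop :=
  (forall i j k : nat, (1 <= i <= n)%N -> (1 <= j <= n)%N -> (1 <= k <= n)%N -> c i j k = c j i k) /\
  (* condition (star): c_ij^k = 0 whenever k <= max i j *)
  (forall i j k : nat, (1 <= i <= n)%N -> (1 <= j <= n)%N -> (1 <= k <= n)%N ->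
     (k <= maxn i j)%N -> c i j k = 0) /\
  (forall i k : nat, (1 <= i <= n.-1)%N -> (1 <= k <= n)%N ->
     c i i k = (if k == i.+1 then 1 else 0)) /\
  c 2 3 4 = 1 /\
  c 1 2 4 != 0 /\
  (forall i : nat, (2 <= i <= n.-1)%N -> c 1 i i.+1 = 0).

(* Main.v *)
Require Import Defs.
From HB Require Import structures.
From mathcomp Require Import all_boot all_order all_algebra.
From mathcomp Require Import complex.
From mathcomp Require Import Rstruct.
From mathcomp Require Import ring zify.
Import GRing.Theory.
Local Open Scope ring_scope.

Lemma Sn_star n c : in_Sn n c -> forall i j k : 'I_n,
  (k <= maxn i j)%N -> c i.+1 j.+1 k.+1 = 0.
Proof.
case=> _ [Hs _] i j k h; apply: Hs; rewrite /= ?ltn_ord //.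
lia.
Qed.

Lemma Sn_sq n c : in_Sn n c -> forall i k : 'I_n, (i.+1 < n)%N ->
  c i.+1 i.+1 k.+1 = if (k : nat) == i.+1 then 1 else 0.
Proof.
case=> _ [_ [Hq _]] i k h; rewrite Hq /= ?ltn_ord //; lia.
Qed.

Lemma Sn_c1 n c : in_Sn n c -> forall i : nat, (1 <= i)%N -> (i.+1 < n)%N ->
  c 1 i.+1 i.+2 = 0.
Proof.
case=> _ [_ [_ [_ [_ H]]]] i h1 h2; apply: H; lia.
Qed.

Lemma amulDl n c (u1 u2 v : 'rV[C]_n) : amul c (u1 + u2) v = amul c u1 v + amul c u2 v.
Proof.
apply/rowP => k; rewrite !mxE -big_split /=; apply eq_bigr => i _.
rewrite -big_split /=; apply eq_bigr => j _; rewrite !mxE; ring.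
Qed.

Lemma amulDr n c (u v1 v2 : 'rV[C]_n) : amul c u (v1 + v2) = amul c u v1 + amul c u v2.
Proof.
apply/rowP => k; rewrite !mxE -big_split /=; apply eq_bigr => i _.
rewrite -big_split /=; apply eq_bigr => j _; rewrite !mxE; ring.
Qed.

Lemma amulZl n c s (u v : 'rV[C]_n) : amul c (s *: u) v = s *: amul c u v.
Proof.
apply/rowP => k; rewrite !mxE mulr_sumr; apply eq_bigr => i _.
rewrite mulr_sumr; apply eq_bigr => j _; rewrite !mxE; ring.
Qed.

Lemma amulZr n c s (u v : 'rV[C]_n) : amul c u (s *: v) = s *: amul c u v.
Proof.
apply/rowP => k; rewrite !mxE mulr_sumr; apply eq_bigr => i _.
rewrite mulr_sumr; apply eq_bigr => j _; rewrite !mxE; ring.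
Qed.
Lemma basisE n i (k : 'I_n) : basis_vec n i 0 k = if (k : nat) == i.-1 then 1 else 0.
Proof. by rewrite mxE. Qed.

Lemma sum_basis n (p0 : 'I_n) (F : 'I_n -> C) :
  \sum_(p < n) basis_vec n p0.+1 0 p * F p = F p0.
Proof.
rewrite (bigD1 p0) //= basisE eqxx mul1r big1 ?addr0 // => p hp.
rewrite basisE /=; case: eqP => h; last by rewrite mul0r.
by case/eqP: hp; apply: val_inj.
Qed.

Lemma amul_basis n c (i j k : 'I_n) :
  amul c (basis_vec n i.+1) (basis_vec n j.+1) 0 k = c i.+1 j.+1 k.+1.
Proof.
rewrite mxE.
transitivity (\sum_(p < n) basis_vec n i.+1 0 p *
   \sum_(q < n) basis_vec n j.+1 0 q * c p.+1 q.+1 k.+1).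
  apply eq_bigr => p _; rewrite mulr_sumr; apply eq_bigr => q _; by rewrite mulrA.
rewrite sum_basis; exact: (sum_basis _ j (fun q => c i.+1 q.+1 k.+1)).
Qed.

Lemma amul_sq n c (H : in_Sn n c) (i : 'I_n) : (i.+1 < n)%N ->
  amul c (basis_vec n i.+1) (basis_vec n i.+1) = basis_vec n i.+2.
Proof.
move=> hi; apply/rowP => k; rewrite amul_basis (Sn_sq _ _ H) // basisE //.
Qed.

Lemma next_amul n c (H : in_Sn n c) (u v : 'rV[C]_n) (l k : 'I_n) :
  (forall q : 'I_n, (q < l)%N -> v 0 q = 0) -> (k : nat) = l.+1 ->
  amul c u v 0 k = \sum_(p < n) u 0 p * v 0 l * c p.+1 l.+1 k.+1.
Proof.
move=> Hv Hk; rewrite mxE; apply eq_bigr => p _.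
rewrite (bigD1 l) //= big1 ?addr0 // => j Hj.
case: (ltnP j l) => hj; first by rewrite Hv // mulr0 mul0r.
have hj' : (j : nat) != l by [].
rewrite (Sn_star _ _ H) ?mulr0 //; lia.
Qed.

Lemma low_amul n c (H : in_Sn n c) (u v : 'rV[C]_n) (m : nat) (k : 'I_n) :
  (forall q : 'I_n, (q < m)%N -> v 0 q = 0) -> (k <= m)%N -> amul c u v 0 k = 0.
Proof.
move=> Hv Hk; rewrite mxE; rewrite big1 // => p _; rewrite big1 // => j _.
case: (ltnP j m) => hj; first by rewrite Hv // mulr0 mul0r.
rewrite (Sn_star _ _ H) ?mulr0 //; lia.
Qed.

Lemma collapse n c (H : in_Sn n c) (u : 'rV[C]_n) s (l k : 'I_n) :
  (k : nat) = l.+1 ->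
  (forall p : 'I_n, (p < l)%N -> u 0 p * c p.+1 l.+1 k.+1 = 0) ->
  \sum_(p < n) u 0 p * s * c p.+1 l.+1 k.+1 = u 0 l * s.
Proof.
move=> Hk Hu; rewrite (bigD1 l) //= big1 ?addr0.
  rewrite (Sn_sq _ _ H) ?Hk ?eqxx ?mulr1 //; rewrite -Hk; exact: ltn_ord.
move=> p hp; case: (ltnP p l) => h.
  by rewrite mulrAC Hu // mul0r.
have hp' : (p : nat) != l by [].
rewrite (Sn_star _ _ H) ?mulr0 //; lia.
Qed.

Lemma ann_l n c (H : in_Sn n c) (v : 'rV[C]_n) : amul c (basis_vec n n) v = 0.
Proof.
apply/rowP => k; rewrite !mxE; rewrite big1 // => i _; rewrite big1 // => j _.
rewrite basisE; case: eqP => h; last by rewrite !mul0r.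
rewrite (Sn_star _ _ H) ?mulr0 //.
have := ltn_ord k; lia.
Qed.

Lemma ann_r n c (H : in_Sn n c) (v : 'rV[C]_n) : amul c v (basis_vec n n) = 0.
Proof.
apply/rowP => k; rewrite !mxE; rewrite big1 // => i _; rewrite big1 // => j _.
rewrite basisE; case: eqP => h; last by rewrite mulr0 mul0r.
rewrite (Sn_star _ _ H) ?mulr0 //.
have := ltn_ord k; lia.
Qed.

Lemma basis_rowM n (M : 'M[C]_n) (i : 'I_n) : basis_vec n i.+1 *m M = row i M.
Proof.
apply/rowP => l; rewrite !mxE (bigD1 i) //= basisE eqxx mul1r big1 ?addr0 //.
move=> k hk; rewrite basisE /=; case: eqP => h; last by rewrite mul0r.
by case/eqP: hk; apply: val_inj.
Qed.

Lemma lowmul n (M : 'M[C]_n) (w : 'rV[C]_n) (l : 'I_n) :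
  (forall q : 'I_n, (q < l)%N -> w 0 q = 0) ->
  (forall q l : 'I_n, (l < q)%N -> M q l = 0) ->
  (w *m M) 0 l = w 0 l * M l l.
Proof.
move=> Hw HM; rewrite mxE (bigD1 l) //= big1 ?addr0 // => q hq.
case: (ltnP q l) => h; first by rewrite Hw ?mul0r.
have hq' : (q : nat) != l by [].
rewrite HM ?mulr0 //; lia.
Qed.

Lemma scalE n s (u : 'rV[C]_n) k : (s *: u) 0 k = s * u 0 k.
Proof. by rewrite mxE. Qed.

Lemma aut_form n c (H : in_Sn n c) (h4 : (3 < n)%N) (M : 'M[C]_n) :
  is_aut c M -> exists x : C, forall i : 'I_n,
    row i M = basis_vec n i.+1 + (if (i : nat) == 0%N then x *: basis_vec n n else 0).
Proof.
case=> HU Hom.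
have rowS : forall i j : 'I_n, (j : nat) = i.+1 -> row j M = amul c (row i M) (row i M).
  move=> i j hj.
  have hi : (i.+1 < n)%N by rewrite -hj ltn_ord.
  by rewrite -!basis_rowM Hom (amul_sq _ _ H) // hj.
have tri : forall q l : 'I_n, (l < q)%N -> M q l = 0.
  suff: forall m (q : 'I_n), (q : nat) = m -> forall l : 'I_n, (l < q)%N -> M q l = 0.
    by move=> h q; exact: h.
  elim=> [|m IH] q hq l hl; first by rewrite hq in hl.
  have hm : (m < n)%N by have := ltn_ord q; lia.
  pose i := Ordinal hm.
  have -> : M q l = row q M 0 l by rewrite mxE.
  rewrite (rowS i q) //; apply: (low_amul _ _ H _ _ m) => [q' hq'|]; last by lia.
  by rewrite mxE; apply: IH.
have h0 : (0 < n)%N by lia.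
pose i0 := Ordinal h0.
have diag : forall i : 'I_n, M i i != 0.
  suff: forall m (i : 'I_n), (i : nat) = m -> M i i != 0 by move=> h i; exact: h.
  elim=> [|m IH] i hi.
    have -> : i = i0 by apply: val_inj.
    apply/eqP => h00.
    have col0 : forall q : 'I_n, M q i0 = 0.
      move=> q; case: (posnP q) => hq; last exact: tri.
      by have -> : q = i0 by apply: val_inj.
    have := mulmxKV HU (basis_vec n 1).
    move/(congr1 (fun r : 'rV[C]_n => r 0 i0)); rewrite mxE big1 ?basisE.
      by move/eqP; rewrite /= eq_sym oner_eq0.
    by move=> q _; rewrite col0 mulr0.
  have hm : (m < n)%N by have := ltn_ord i; lia.
  pose i' := Ordinal hm.
  have -> : M i i = row i M 0 i by rewrite mxE.
  rewrite (rowS i' i) // (next_amul _ _ H _ _ i') //; last by move=> q hq; rewrite mxE tri.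
  rewrite (collapse _ _ H) //; last by move=> p hp; rewrite mxE tri ?mul0r.
  by rewrite mxE mulf_neq0 // IH.
have hnn : (n.-1 < n)%N by lia.
pose nn := Ordinal hnn.
pose a := M i0 i0.
pose x := M i0 nn.
have A0 : forall i : 'I_n, (1 <= i)%N -> (i.+1 < n)%N -> M i0 i = 0.
  suff: forall m (i : 'I_n), (i < m)%N -> (1 <= i)%N -> (i.+1 < n)%N -> M i0 i = 0.
    by move=> h i; apply: (h i.+1).
  elim=> [|m IH] i him h1 h2; first done.
  case: (ltnP i m) => him'; first exact: IH.
  pose k := Ordinal h2.
  have E : amul c (row i0 M) (row i M) 0 k =
           (amul c (basis_vec n i0.+1) (basis_vec n i.+1) *m M) 0 k
    by rewrite -!basis_rowM Hom.
  rewrite (next_amul _ _ H _ _ i) // in E; last by move=> q hq; rewrite mxE tri.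
  rewrite (collapse _ _ H) // in E; last first.
    move=> p hp; case: (posnP p) => hp0.
      by rewrite /= hp0 (Sn_c1 _ _ H) ?mulr0.
    by rewrite mxE IH ?mul0r //; lia.
  rewrite lowmul // in E; last first.
    move=> q hq; rewrite amul_basis (Sn_star _ _ H) //; move: hq; rewrite /k /=; lia.
  rewrite amul_basis /= (Sn_c1 _ _ H) // mul0r in E.
  move/eqP: E; rewrite !mxE mulf_eq0 (negbTE (diag i)) orbF => /eqP //.
have R0 : row i0 M = a *: basis_vec n 1 + x *: basis_vec n n.
  apply/rowP => l; rewrite !mxE /=.
  case: (posnP l) => hl.
    have -> : l = i0 by apply: val_inj.
    have -> : ((i0 : nat) == n.-1) = false by apply/eqP; rewrite /=; lia.
    by rewrite mulr1 mulr0 addr0.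
  case: (eqVneq (l : nat) n.-1) => hl'.
    have -> : l = nn by apply: val_inj.
    by rewrite ?eqxx mulr0 add0r mulr1.
  rewrite A0 //; last by have := ltn_ord l; lia.
  by rewrite !mulr0 addr0.
have stepZ : forall (i j : 'I_n) s, (j : nat) = i.+1 ->
    row i M = s *: basis_vec n i.+1 -> row j M = (s * s) *: basis_vec n j.+1.
  move=> i j s hj hr.
  have hi : (i.+1 < n)%N by rewrite -hj ltn_ord.
  by rewrite (rowS i j) // hr amulZl amulZr (amul_sq _ _ H) // scalerA hj.
have h1 : (1 < n)%N by lia.
have h2 : (2 < n)%N by lia.
pose i1 := Ordinal h1. pose i2 := Ordinal h2. pose i3 := Ordinal h4.
have R1 : row i1 M = (a * a) *: basis_vec n i1.+1.
  rewrite (rowS i0 i1) // R0 amulDl !amulDr !amulZl !amulZr !(ann_l _ _ H) !(ann_r _ _ H).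
  rewrite !scaler0 !addr0 scalerA (amul_sq _ _ H i0) //.
have R2 := stepZ i1 i2 _ erefl R1.
have R3 := stepZ i2 i3 _ erefl R2.
have E1 : amul c (row i1 M) (row i2 M) 0 i3 =
          (amul c (basis_vec n i1.+1) (basis_vec n i2.+1) *m M) 0 i3
  by rewrite -!basis_rowM Hom.
have E2 : amul c (row i0 M) (row i1 M) 0 i3 =
          (amul c (basis_vec n i0.+1) (basis_vec n i1.+1) *m M) 0 i3
  by rewrite -!basis_rowM Hom.
have M33 : M i3 i3 = a * a * (a * a) * (a * a * (a * a)).
  have -> : M i3 i3 = row i3 M 0 i3 by rewrite mxE.
  by rewrite R3 scalE basisE eqxx mulr1.
have c234 : c 2 3 4 = 1 by case: H => _ [_ [_ [-> _]]].
have c124 : c 1 2 4 != 0 by case: H => _ [_ [_ [_ [? _]]]].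
rewrite R1 R2 amulZl amulZr !scalE (amul_basis _ _ i1 i2 i3) in E1.
rewrite (lowmul _ _ _ _ _ tri) in E1; last first.
  move=> q hq; rewrite amul_basis (Sn_star _ _ H) //; move: hq; rewrite /=; lia.
rewrite (amul_basis _ _ i1 i2 i3) M33 /= c234 in E1.
rewrite R0 R1 amulDl !amulZl !amulZr !(ann_l _ _ H) !scaler0 addr0 !scalE in E2.
rewrite (amul_basis _ _ i0 i1 i3) in E2.
rewrite (lowmul _ _ _ _ _ tri) in E2; last first.
  move=> q hq; rewrite amul_basis.
  case: (ltnP q 2) => hq2; first by rewrite (Sn_star _ _ H) //= ; lia.
  have -> : q = i2 by apply: val_inj; move: hq; rewrite /=; lia.
  by rewrite /= (Sn_c1 _ _ H 1).
rewrite (amul_basis _ _ i0 i1 i3) M33 /= in E2.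
have a0 : a != 0 := diag i0.
have e1 : a ^+ 6 = a ^+ 8.
  have <- : a * a * (a * a * (a * a) * 1) = a ^+ 6 by ring.
  rewrite E1; ring.
have e2 : a ^+ 3 = a ^+ 8.
  apply: (mulIf c124).
  transitivity (a * (a * a * c 1%N 2%N 4%N)); first by ring.
  rewrite E2; ring.
have e3 : a ^+ 3 = 1.
  apply: (mulfI (expf_neq0 3 a0)).
  by rewrite mulr1 -exprD e2 -e1.
have e6 : a ^+ 6 = 1.
  by rewrite (_ : 6 = 3 + 3)%N // exprD e3 mulr1.
have e22 : a ^+ 2 = 1.
  apply: (mulfI (expf_neq0 6 a0)).
  by rewrite mulr1 -exprD (_ : 6 + 2 = 8)%N // -e1 e6.
have a1 : a = 1 by rewrite -e3 exprS e22 mulr1.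
have rows : forall m (i : 'I_n), (i : nat) = m.+1 -> row i M = basis_vec n i.+1.
  elim=> [|m IH] i hi.
    have -> : i = i1 by apply: val_inj.
    by rewrite R1 a1 mulr1 scale1r.
  have hm : (m.+1 < n)%N by have := ltn_ord i; lia.
  rewrite (stepZ (Ordinal hm) i 1 hi); first by rewrite mulr1 scale1r.
  by rewrite scale1r; apply: IH.
exists x => i; case: (posnP i) => hi.
  have -> : i = i0 by apply: val_inj.
  by rewrite R0 a1 scale1r.
by rewrite (rows i.-1 i) ?prednK // addr0.
Qed.

Lemma ann_char n c (H : in_Sn n c) (h : (0 < n)%N) (a : 'rV[C]_n) :
  in_Ann c a <-> exists x : C, a = x *: basis_vec n n.
Proof.
split; last first.
  move=> [x ->] b; rewrite amulZl amulZr (ann_l _ _ H) (ann_r _ _ H) !scaler0; by split.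
move=> Ha.
have hnn : (n.-1 < n)%N by lia.
pose nn := Ordinal hnn.
have low : forall m (l : 'I_n), (l < m)%N -> (l.+1 < n)%N -> a 0 l = 0.
  elim=> [|m IH] l hl hl2; first done.
  case: (ltnP l m) => hlm; first exact: IH.
  pose k := Ordinal hl2.
  have E := congr1 (fun r : 'rV[C]_n => r 0 k) (proj1 (Ha (basis_vec n l.+1))).
  simpl in E.
  rewrite (next_amul _ _ H _ _ l k) // in E; last first.
    move=> q hq; rewrite basisE /=; case: eqP => // e; lia.
  rewrite (collapse _ _ H) // in E; last first.
    move=> p hp; rewrite IH ?mul0r //; lia.
  by move: E; rewrite basisE eqxx mulr1 mxE.
exists (a 0 nn); apply/rowP => l; rewrite scalE basisE.
case: eqP => e.
  have -> : l = nn by apply: val_inj.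
  by rewrite mulr1.
rewrite mulr0 (low n) //; have := ltn_ord l; lia.
Qed.

Lemma bd n (i : 'I_n) : basis_vec n i.+1 = delta_mx 0 i.
Proof.
apply/rowP => l; rewrite basisE !mxE /=.
case: (l =P i) => [->|ne]; first by rewrite eqxx.
rewrite (_ : ((l : nat) == i) = false) //; apply/eqP => e; apply: ne; exact: val_inj.
Qed.

Lemma mulM n (i0 : 'I_n) (h0 : (i0 : nat) = 0%N) (y : C) (N : 'M[C]_n) :
  (forall i : 'I_n, row i N = basis_vec n i.+1 + (if (i : nat) == 0%N then y *: basis_vec n n else 0)) ->
  forall u : 'rV[C]_n, u *m N = u + (y * u 0 i0) *: basis_vec n n.
Proof.
move=> hN u; rewrite mulmx_sum_row.
under eq_bigr do rewrite hN scalerDr.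
rewrite big_split /=.
under eq_bigr do rewrite bd.
rewrite -row_sum_delta; congr (_ + _).
rewrite (bigD1 i0) //= h0 eqxx big1 ?addr0.
  by rewrite scalerA mulrC.
move=> i hi; rewrite (_ : ((i : nat) == 0%N) = false) ?scaler0 //.
apply/eqP => e; case/eqP: hi; apply: val_inj; rewrite /= e h0 //.
Qed.

Lemma aut_of_form n c (H : in_Sn n c) (h4 : (3 < n)%N) (M : 'M[C]_n) (x : C) :
  (forall i : 'I_n, row i M = basis_vec n i.+1 + (if (i : nat) == 0%N then x *: basis_vec n n else 0)) ->
  is_aut c M.
Proof.
move=> hM.
have h0 : (0 < n)%N by lia.
pose i0 := Ordinal h0.
have en0 : basis_vec n n 0 i0 = 0 by rewrite basisE /=; case: eqP => // e; lia.
split.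
  pose N : 'M[C]_n := \matrix_(i < n) (basis_vec n i.+1 +
      (if (i : nat) == 0%N then (- x) *: basis_vec n n else 0)).
  have hN : forall i : 'I_n, row i N = basis_vec n i.+1 +
      (if (i : nat) == 0%N then (- x) *: basis_vec n n else 0) by move=> i; rewrite rowK.
  have MN : M *m N = 1%:M.
    apply/row_matrixP => i; rewrite row_mul (mulM _ i0 erefl _ _ hN) hM row1 -bd.
    case: (posnP i) => hi.
      have -> : i = i0 by apply: val_inj.
      rewrite /= mxE scalE en0 basisE /= mulr0 addr0 mulr1 -addrA -scalerDl.
      by rewrite subrr scale0r addr0.
    rewrite !addr0 basisE /=; case: eqP => e; first lia.
    by rewrite mulr0 scale0r addr0.
  by case: (mulmx1_unit MN).
move=> u v; rewrite !(mulM _ i0 erefl _ _ hM).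
rewrite amulDl !amulDr !amulZl !amulZr !(ann_l _ _ H) !(ann_r _ _ H) !scaler0 !addr0.
by rewrite (low_amul _ _ H _ _ 0) // mulr0 scale0r addr0.
Qed.

Theorem mainTheorem13 (n : nat) (c : structc) :
  (4 <= n)%N -> in_Sn n c ->
  (forall a : 'rV[C]_n, in_Ann c a <-> exists x : C, a = x *: basis_vec n n) /\
  (forall M : 'M[C]_n, is_aut c M <->
     exists x : C, forall i : 'I_n,
       row i M = basis_vec n i.+1 + (if (i : nat) == 0%N then x *: basis_vec n n else 0)).
Proof.
move=> h4 H; split.
  move=> a; apply: ann_char => //; lia.
move=> M; split; first exact: aut_form.
by case=> x hx; apply: (aut_of_form _ _ H h4 M x).
Qed.
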